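(* Let $S$ be a random subset of a finite set $V$ and let $u\in V$. Suppose that the events $\{u'\in S\}$ for $u'\ne u$ are jointly independent of the event $\{u\in S\}$. Let $s$ be an element of $S$ chosen uniformly at random (if $S=\varnothing$, $s$ is undefined). Then $\Pr[u=s]\ge\Pr[u\in S]/(\mathbb{E}[|S|]+1)$. *)

(* Defs.v *)
From HB Require Import structures.
From mathcomp Require Import all_boot all_order all_algebra.
Set Implicit Arguments. Unset Strict Implicit. Unset Printing Implicit Defensive.
Import Order.TTheory GRing.Theory Num.Theory.
Local Open Scope ring_scope.

(* A random subset S of the finite set V: a probability distribution
   P on {set V}. *)
Definition is_distr (R : realFieldType) (V : finType) (P : {ffun {set V} -> R}) :=
  (forall S, 0 <= P S) /\ \sum_(S : {set V}) P S = 1.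

Definition prob (R : realFieldType) (V : finType) (P : {ffun {set V} -> R})
  (E : pred {set V}) : R := \sum_(S : {set V} | E S) P S.

Definition exp_card (R : realFieldType) (V : finType) (P : {ffun {set V} -> R}) : R :=
  \sum_(S : {set V}) P S * #|S|%:R.

(* The family of events {u' in S}, u' <> u, is (jointly) independent of the
   event {u in S}: every event determined by (1[u' in S])_{u' <> u}, i.e. by
   S :\ u, is independent of {u in S}. *)
Definition indep_rest (R : realFieldType) (V : finType) (P : {ffun {set V} -> R})
  (u : V) :=
  forall A : {set {set V}},
    prob P (fun S => (S :\ u \in A) && (u \in S))
    = prob P (fun S => S :\ u \in A) * prob P (fun S => u \in S).

(* Pr[u = s], where s is uniform in S (given S); the case S = set0
   contributes nothing since then u \notin S. *)
Definition prob_pick (R : realFieldType) (V : finType) (P : {ffun {set V} -> R})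
  (u : V) : R :=
  \sum_(S : {set V} | u \in S) P S * (#|S|%:R)^-1.

(* Main.v *)
Require Import Defs.
From HB Require Import structures.
From mathcomp Require Import all_boot all_order all_algebra.
From mathcomp Require Import ring lra.
Import Order.TTheory GRing.Theory Num.Theory.
Local Open Scope ring_scope.

Lemma split_T (R : realFieldType) (V : finType) (P : {ffun {set V} -> R}) (u : V)
  (C : pred {set V}) (g : {set V} -> R) :
  \sum_(S | C S) P S * g (S :\ u) =
  \sum_(T : {set V}) g T * prob P (fun S => (S :\ u \in [set T]) && C S).
Proof.
rewrite (partition_big (fun S => S :\ u) predT) //=.
apply: eq_bigr => T _; rewrite /prob mulr_sumr.
rewrite [RHS](eq_bigl (fun S => C S && (S :\ u == T))); last first.
  by move=> S; rewrite in_set1 andbC.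
by apply: eq_bigr => S /andP[_ /eqP ->]; rewrite mulrC.
Qed.

Lemma tangent (R : realFieldType) (x m : R) : 0 <= x -> 0 <= m ->
  1 / (m + 1) - (x - m) / (m + 1) ^+ 2 <= 1 / (x + 1).
Proof.
move=> hx hm.
have h1 : 0 < x + 1 by lra.
have h2 : 0 < m + 1 by lra.
rewrite -subr_ge0.
have -> : 1 / (x + 1) - (1 / (m + 1) - (x - m) / (m + 1) ^+ 2)
  = (x - m) ^+ 2 / ((x + 1) * (m + 1) ^+ 2).
  by field; apply/andP; split; rewrite ?lt0r_neq0.
by apply: divr_ge0; [apply: sqr_ge0 | apply: mulr_ge0; [lra| apply: sqr_ge0]].
Qed.

Theorem mainTheorem9 (R : realFieldType) (V : finType) (P : {ffun {set V} -> R})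
  (u : V) :
  is_distr P -> indep_rest P u ->
  prob_pick P u >= prob P (fun S => u \in S) / (exp_card P + 1).
Proof.
move=> [P0 P1] hind.
set p := prob P (fun S => u \in S).
pose g := fun T : {set V} => (#|T|%:R + 1 : R)^-1.
have pick : prob_pick P u = \sum_(S : {set V} | u \in S) P S * g (S :\ u).
  apply: eq_bigr => S uS; congr (_ * _); rewrite /g [#|S|](cardsD1 u) uS.
  by rewrite natrD addrC.
have cond : \sum_(S : {set V} | u \in S) P S * g (S :\ u) = p * \sum_(S : {set V}) P S * g (S :\ u).
  rewrite split_T (@split_T _ _ P u predT) mulr_sumr.
  apply: eq_bigr => T _; rewrite hind mulrA mulrC; congr (_ * (_ * _)).
  by apply: eq_bigl => S; rewrite andbT.
pose m := \sum_(S : {set V}) P S * #|S :\ u|%:R.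
have m0 : 0 <= m by apply: sumr_ge0 => S _; apply: mulr_ge0.
have mle : m <= exp_card P.
  apply: ler_sum => S _; apply: ler_wpM2l => //.
  by rewrite ler_nat; apply: subset_leq_card; apply: subsetDl.
have p0 : 0 <= p by apply: sumr_ge0.
have jen : 1 / (m + 1) <= \sum_(S : {set V}) P S * g (S :\ u).
  have : \sum_(S : {set V}) P S * (1 / (m + 1) - (#|S :\ u|%:R - m) / (m + 1) ^+ 2)
         <= \sum_(S : {set V}) P S * g (S :\ u).
    apply: ler_sum => S _; apply: ler_wpM2l => //.
    by have := @tangent R #|S :\ u|%:R m (ler0n _ _) m0; rewrite [X in _ <= X]div1r.
  apply: le_trans; rewrite (eq_bigr (fun S => P S * (1 / (m + 1)) -
     (P S * #|S :\ u|%:R) / (m + 1) ^+ 2 + P S * m / (m + 1) ^+ 2)); last first.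
    by move=> S _; ring.
  rewrite !big_split /= -!mulr_suml P1 -/m mul1r.
  rewrite sumrN -mulr_suml -/m; rewrite le_eqVlt; apply/orP; left; apply/eqP; ring.
rewrite pick cond /=.
apply: le_trans (ler_wpM2l p0 jen).
rewrite mul1r; apply: ler_wpM2l => //.
rewrite lef_pV2 ?posrE; lra.

Qed.
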